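(* Let $1<p_1<p_2<\infty$. Let $\mathbf{x},\mathbf{y}_1,\dots,\mathbf{y}_m\in \ell_{p_1}\cap \ell_{p_2}$ be such that $\mathbf{y}_1,\dots,\mathbf{y}_m$ are linearly independent and $\mathbf{x}\notin \mathbb{Y}=\mathrm{span}\{\mathbf{y}_1,\dots,\mathbf{y}_m\}$. Let $\mathbf{x_0}$ and $\mathbf{y_0}$ be the best approximations to $\mathbf{x}$ out of $\mathbb{Y}$ in $\ell_{p_1}$ and in $\ell_{p_2}$, respectively. Then $\mathrm{dist}_{p_1}(\mathbf{x},\mathbb{Y})=\mathrm{dist}_{p_2}(\mathbf{x},\mathbb{Y})$ if and only if there exist a non-zero $\lambda\in \mathbb{R}$ and $j\in \mathbb{N}$ such that $\mathbf{x}-\mathbf{x_0}=\mathbf{x}-\mathbf{y_0}=\lambda e_j$ and $\mathbb{Y}\subseteq \{(\lambda_1,\lambda_2,\dots)\in \ell_{p_1}\cap \ell_{p_2}: \lambda_j=0\}$.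
   Context: $\ell_p$ is the real sequence space with norm $\|(x_k)\|_p=(\sum_k|x_k|^p)^{1/p}$; $e_j$ is the sequence with $1$ in position $j$ and $0$ elsewhere. $\mathrm{dist}_p(\mathbf{x},\mathbb{Y})=\inf_{y\in\mathbb{Y}}\|\mathbf{x}-y\|_p$. For $1<p<\infty$, best approximations from finite-dimensional subspaces of $\ell_p$ exist and are unique. *)

(* Defs.v *)
From Stdlib Require Import Reals Lra.
From Coquelicot Require Import Coquelicot.
Open Scope R_scope.

(* a ^ p for a >= 0 and real p > 0, with the convention 0 ^ p = 0. *)
Definition rpow (a p : R) : R := if Rle_dec a 0 then 0 else Rpower a p.

Definition seqR := nat -> R.

Definition in_lp (p : R) (x : seqR) : Prop :=
  ex_series (fun k => rpow (Rabs (x k)) p).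

(* the l_p norm (meaningful for x in l_p) *)
Definition lp_norm (p : R) (x : seqR) : R :=
  rpow (Series (fun k => rpow (Rabs (x k)) p)) (1 / p).

Definition seq_sub (x y : seqR) : seqR := fun k => x k - y k.

Definition e (j : nat) : seqR := fun k => if Nat.eqb k j then 1 else 0.

Fixpoint lincomb (m : nat) (c : nat -> R) (y : nat -> seqR) : seqR :=
  match m with
  | O => fun _ => 0
  | S m' => fun k => lincomb m' c y k + c m' * y m' k
  end.

Definition span (m : nat) (y : nat -> seqR) (z : seqR) : Prop :=
  exists c : nat -> R, z = lincomb m c y.

Definition lin_indep (m : nat) (y : nat -> seqR) : Prop :=
  forall c : nat -> R, lincomb m c y = (fun _ => 0) -> forall i, (i < m)%nat -> c i = 0.

Definition dist_p (p : R) (x : seqR) (Y : seqR -> Prop) : Rbar :=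
  Glb_Rbar (fun r => exists z, Y z /\ r = lp_norm p (seq_sub x z)).

Definition best_approx (p : R) (x : seqR) (Y : seqR -> Prop) (x0 : seqR) : Prop :=
  Y x0 /\ forall z, Y z -> lp_norm p (seq_sub x x0) <= lp_norm p (seq_sub x z).

(* Main.v *)
Require Import Defs.
From Stdlib Require Import Reals Lra Classical FunctionalExtensionality.
From Coquelicot Require Import Coquelicot.

Open Scope R_scope.

Lemma Rpower_pos' a p : 0 < Rpower a p.
Proof. unfold Rpower; apply exp_pos. Qed.

Lemma rpow_ge0 a p : 0 <= rpow a p.
Proof. unfold rpow; destruct (Rle_dec a 0); [lra|]. left; apply Rpower_pos'. Qed.

Lemma rpow_gt0 a p : 0 < a -> 0 < rpow a p.
Proof. intro. unfold rpow; destruct (Rle_dec a 0); [lra|]. apply Rpower_pos'. Qed.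

Lemma rpow_0 p : rpow 0 p = 0.
Proof. unfold rpow; destruct (Rle_dec 0 0); lra. Qed.

Lemma rpow_eq0 a p : rpow a p = 0 -> a <= 0.
Proof. unfold rpow; destruct (Rle_dec a 0); auto. intro H. pose proof (Rpower_pos' a p). lra. Qed.

Lemma rpow_lt a b p : 0 <= a -> a < b -> 0 < p -> rpow a p < rpow b p.
Proof.
  intros. unfold rpow. destruct (Rle_dec b 0); [lra|].
  destruct (Rle_dec a 0). apply Rpower_pos'. apply Rlt_Rpower_l; lra.
Qed.

Lemma rpow_le a b p : 0 <= a -> a <= b -> 0 < p -> rpow a p <= rpow b p.
Proof.
  intros. destruct (Req_dec a b). subst; lra. left; apply rpow_lt; lra.
Qed.

Lemma rpow_le_inv a b p : 0 <= a -> 0 <= b -> 0 < p -> rpow a p <= rpow b p -> a <= b.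
Proof.
  intros. destruct (Rle_lt_dec a b); auto. pose proof (rpow_lt b a p). lra.
Qed.

Lemma rpow_lt_inv a b p : 0 <= a -> 0 <= b -> 0 < p -> rpow a p < rpow b p -> a < b.
Proof.
  intros. destruct (Rlt_le_dec a b); auto. pose proof (rpow_le b a p). lra.
Qed.

Lemma rpow_inj a b p : 0 <= a -> 0 <= b -> 0 < p -> rpow a p = rpow b p -> a = b.
Proof.
  intros. apply Rle_antisym; eapply rpow_le_inv; eauto; lra.
Qed.

Lemma rpow_rpow a p q : 0 <= a -> rpow (rpow a p) q = rpow a (p * q).
Proof.
  intros. unfold rpow at 2 3. destruct (Rle_dec a 0). apply rpow_0.
  unfold rpow. destruct (Rle_dec (Rpower a p) 0).
  pose proof (Rpower_pos' a p); lra. apply Rpower_mult.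
Qed.

Lemma rpow_mul a b p : 0 <= a -> 0 <= b -> rpow (a * b) p = rpow a p * rpow b p.
Proof.
  intros. destruct (Req_dec a 0). subst. rewrite Rmult_0_l, !rpow_0; ring.
  destruct (Req_dec b 0). subst. rewrite Rmult_0_r, !rpow_0; ring.
  unfold rpow. destruct (Rle_dec (a*b) 0). nra.
  destruct (Rle_dec a 0); [lra|]. destruct (Rle_dec b 0); [lra|].
  rewrite Rpower_mult_distr; auto; lra.
Qed.

Lemma rpow_plus a p q : rpow a (p + q) = rpow a p * rpow a q.
Proof. unfold rpow. destruct (Rle_dec a 0). ring. apply Rpower_plus. Qed.

Lemma rpow_1 a : 0 <= a -> rpow a 1 = a.
Proof. intros. unfold rpow. destruct (Rle_dec a 0). lra. apply Rpower_1; lra. Qed.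

Lemma rpow_one p : rpow 1 p = 1.
Proof. unfold rpow. destruct (Rle_dec 1 0). lra. unfold Rpower. rewrite ln_1, Rmult_0_r. apply exp_0. Qed.

Lemma rpow_inv a p : 0 <= a -> 0 < p -> rpow (rpow a p) (1 / p) = a.
Proof.
  intros. rewrite rpow_rpow; auto. replace (p * (1/p)) with 1 by (field; lra).
  apply rpow_1; auto.
Qed.

Lemma rpow_le_self s p : 0 <= s <= 1 -> 1 <= p -> rpow s p <= s.
Proof.
  intros. replace p with (1 + (p - 1)) by ring. rewrite rpow_plus, rpow_1 by lra.
  assert (rpow s (p-1) <= 1).
  { destruct (Req_dec (p-1) 0). unfold rpow. destruct (Rle_dec s 0). lra.
    rewrite H1. rewrite Rpower_O; lra.
    rewrite <- (rpow_one (p-1)) at 2. apply rpow_le; lra. }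
  pose proof (rpow_ge0 s (p-1)). nra.
Qed.

Lemma Rabs_rpow a p : Rabs (rpow a p) = rpow a p.
Proof. apply Rabs_pos_eq, rpow_ge0. Qed.

Lemma is_series_zero : is_series (fun _ : nat => 0) 0.
Proof.
  assert (Rabs (/2) < 1) by (rewrite Rabs_pos_eq; lra).
  pose proof (is_series_scal_r 0 _ _ (is_series_geom _ H)).
  rewrite Rmult_0_r in H0. eapply is_series_ext; [|exact H0]. intro; simpl; ring.
Qed.

Lemma single_is_series j c : is_series (fun k => if Nat.eqb k j then c else 0) c.
Proof.
  revert c; induction j; intro c.
  - apply is_series_decr_1. simpl.
    replace (plus c (opp c)) with (0:R) by (first [change (0 = c + - c) | change (c = c + - 0)]; ring).
    apply is_series_zero.
  - apply is_series_decr_1. simpl.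
    match goal with |- is_series _ ?l => replace l with c end. apply IHj. change (c = Rplus (c:R) (Ropp 0)). rewrite Ropp_0. symmetry; apply Rplus_0_r.
Qed.

Lemma single_Series j c : Series (fun k => if Nat.eqb k j then c else 0) = c.
Proof. apply is_series_unique, single_is_series. Qed.

Lemma single_ex j c : ex_series (fun k => if Nat.eqb k j then c else 0).
Proof. eexists; apply single_is_series. Qed.

Lemma Series_ge0 a : (forall n, 0 <= a n) -> ex_series a -> 0 <= Series a.
Proof.
  intros. assert (Series (fun _ => 0) = 0) by (apply is_series_unique, is_series_zero).
  rewrite <- H1. apply Series_le; auto. intro; split; auto; lra.
Qed.

Lemma Series_ge_term a j : (forall n, 0 <= a n) -> ex_series a -> a j <= Series a.
Proof.
  intros. rewrite <- (single_Series j (a j)). apply Series_le; auto.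
  intro n. destruct (Nat.eqb n j) eqn:E. apply Nat.eqb_eq in E; subst. split; [apply H|lra].
  split; [lra|apply H].
Qed.

Lemma Series_ge_two a j k : (forall n, 0 <= a n) -> ex_series a -> j <> k ->
  a j + a k <= Series a.
Proof.
  intros. rewrite <- (single_Series j (a j)), <- (single_Series k (a k)).
  rewrite <- Series_plus by apply single_ex. apply Series_le; auto.
  intro n. destruct (Nat.eqb n j) eqn:E; destruct (Nat.eqb n k) eqn:F.
  apply Nat.eqb_eq in E; apply Nat.eqb_eq in F; subst; congruence.
  apply Nat.eqb_eq in E; subst. specialize (H j); lra.
  apply Nat.eqb_eq in F; subst. specialize (H k); lra.
  specialize (H n); lra.
Qed.

Lemma Series_zero_terms a : (forall n, 0 <= a n) -> ex_series a -> Series a <= 0 ->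
  forall n, a n = 0.
Proof.
  intros. pose proof (Series_ge_term a n H H0). specialize (H n). lra.
Qed.

Lemma glb_min (E : R -> Prop) r : E r -> (forall s, E s -> r <= s) -> Glb_Rbar E = Finite r.
Proof.
  intros. apply is_glb_Rbar_unique. split.
  - intros s Hs. simpl. auto.
  - intros b Hb. apply Hb. auto.
Qed.

Lemma in_lp_zero p : in_lp p (fun _ => 0).
Proof.
  unfold in_lp. exists 0. eapply is_series_ext; [|apply is_series_zero].
  intro; simpl. rewrite Rabs_R0, rpow_0. reflexivity.
Qed.

Lemma rpow_add_bound a b p : 0 < p ->
  rpow (Rabs (a + b)) p <= rpow 2 p * (rpow (Rabs a) p + rpow (Rabs b) p).
Proof.
  intros Hp. set (M := Rmax (Rabs a) (Rabs b)).
  assert (Rabs (a+b) <= 2 * M).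
  { pose proof (Rabs_triang a b). pose proof (Rmax_l (Rabs a) (Rabs b)).
    pose proof (Rmax_r (Rabs a) (Rabs b)). unfold M; lra. }
  assert (0 <= M) by (unfold M; pose proof (Rmax_l (Rabs a) (Rabs b)); pose proof (Rabs_pos a); lra).
  eapply Rle_trans. apply rpow_le; [apply Rabs_pos|exact H|exact Hp].
  rewrite rpow_mul by lra. apply Rmult_le_compat_l. apply rpow_ge0.
  unfold M, Rmax. destruct (Rle_dec (Rabs a) (Rabs b)).
  pose proof (rpow_ge0 (Rabs a) p); lra. pose proof (rpow_ge0 (Rabs b) p); lra.
Qed.

Lemma exs_scal c a : ex_series a -> ex_series (fun n => c * a n).
Proof. intro H. apply (ex_series_scal_r c) in H. eapply ex_series_ext; [|exact H]. intro; simpl; ring. Qed.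

Lemma exs_plus a b : ex_series a -> ex_series b -> ex_series (fun n => a n + b n).
Proof. intros H1 H2. pose proof (ex_series_plus a b H1 H2). eapply ex_series_ext; [|exact H]. intro; reflexivity. Qed.

Lemma in_lp_comb p u v a w : 0 < p -> in_lp p u -> in_lp p v ->
  (forall k, w k = a * u k + v k) -> in_lp p w.
Proof.
  intros Hp Hu Hv Hw. unfold in_lp in *.
  apply (@ex_series_le R_AbsRing R_CompleteNormedModule _ (fun k => rpow 2 p * (rpow (Rabs a) p * rpow (Rabs (u k)) p + rpow (Rabs (v k)) p))).
  - intro n. rewrite Hw. change norm with Rabs. simpl. rewrite Rabs_rpow.
    eapply Rle_trans. apply rpow_add_bound; auto.
    rewrite Rabs_mult, rpow_mul by apply Rabs_pos. lra.
  - apply exs_scal. apply exs_plus; auto. apply exs_scal; auto.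
Qed.

Lemma lincomb_comb m c d t y : forall k,
  lincomb m (fun i => c i + t * d i) y k = lincomb m c y k + t * lincomb m d y k.
Proof.
  induction m; intro k; simpl. ring. rewrite IHm. ring.
Qed.

Lemma span_comb m y z1 z2 t : span m y z1 -> span m y z2 ->
  span m y (fun k => z1 k + t * z2 k).
Proof.
  intros [c Hc] [d Hd]. exists (fun i => c i + t * d i). subst.
  apply functional_extensionality; intro k. rewrite lincomb_comb. reflexivity.
Qed.

Lemma span_in_lp p m y z : 0 < p -> (forall i, (i < m)%nat -> in_lp p (y i)) ->
  span m y z -> in_lp p z.
Proof.
  intros Hp Hy [c Hc]. subst. induction m; simpl.
  - apply in_lp_zero.
  - apply (in_lp_comb p (y m) (lincomb m c y) (c m)); auto.
    intro; ring.
Qed.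

Section Cmp.
Variables (p1 p2 : R) (u : seqR).
Hypothesis Hp1 : 0 < p1.
Hypothesis Hp12 : p1 < p2.
Hypothesis Hu1 : in_lp p1 u.
Hypothesis Hu2 : in_lp p2 u.

Let b k := rpow (Rabs (u k)) p1.
Let S1 := Series b.
Let S2 := Series (fun k => rpow (Rabs (u k)) p2).
Let q := p2 / p1.

Lemma q_gt1 : 1 < q.
Proof. unfold q. apply Rmult_lt_reg_r with p1; auto. field_simplify; lra. Qed.

Lemma b_ge0 k : 0 <= b k.
Proof. apply rpow_ge0. Qed.

Lemma b_le k : b k <= S1.
Proof. apply Series_ge_term. apply b_ge0. apply Hu1. Qed.

Lemma pow2_eq k : rpow (Rabs (u k)) p2 = b k * rpow (b k) (q - 1).
Proof.
  unfold b. rewrite <- (rpow_1 (rpow (Rabs (u k)) p1)) at 1 by apply rpow_ge0.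
  rewrite <- rpow_plus. rewrite rpow_rpow by apply Rabs_pos. f_equal. unfold q. field. lra.
Qed.

Lemma term_le k : rpow (Rabs (u k)) p2 <= b k * rpow S1 (q - 1).
Proof.
  rewrite pow2_eq. apply Rmult_le_compat_l. apply b_ge0.
  apply rpow_le. apply b_ge0. apply b_le. pose proof q_gt1; lra.
Qed.

Lemma S1_ge0 : 0 <= S1.
Proof. apply Series_ge0. apply b_ge0. apply Hu1. Qed.

Lemma ex_bc : ex_series (fun k => b k * rpow S1 (q - 1)).
Proof. apply ex_series_scal_r. apply Hu1. Qed.

Lemma S2_le : S2 <= rpow S1 q.
Proof.
  replace q with (1 + (q - 1)) by ring. rewrite rpow_plus, rpow_1 by apply S1_ge0.
  unfold S1 at 1. rewrite <- Series_scal_r. apply Series_le.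
  intro n; split. apply rpow_ge0. apply term_le. apply ex_bc.
Qed.

Lemma S2_ge0 : 0 <= S2.
Proof. apply Series_ge0. intro; apply rpow_ge0. apply Hu2. Qed.

Lemma norm_eq1 : lp_norm p1 u = rpow (rpow S1 q) (1 / p2).
Proof.
  unfold lp_norm. fold b. fold S1. rewrite rpow_rpow by apply S1_ge0. f_equal.
  unfold q; field; lra.
Qed.

Lemma norm_le : lp_norm p2 u <= lp_norm p1 u.
Proof.
  rewrite norm_eq1. unfold lp_norm. fold S2. apply rpow_le. apply S2_ge0. apply S2_le.
  apply Rdiv_lt_0_compat; lra.
Qed.

Lemma norm_eq_single j : lp_norm p2 u = lp_norm p1 u -> u j <> 0 ->
  forall k, k <> j -> u k = 0.
Proof.
  intros Heq Hj k Hk. rewrite norm_eq1 in Heq. unfold lp_norm in Heq. fold S2 in Heq.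
  apply rpow_inj in Heq; [|apply S2_ge0|apply rpow_ge0|apply Rdiv_lt_0_compat; lra].
  assert (Hz : forall n, b n * rpow S1 (q - 1) - rpow (Rabs (u n)) p2 = 0).
  { apply Series_zero_terms.
    - intro n. pose proof (term_le n). lra.
    - apply (ex_series_minus (fun n => b n * rpow S1 (q-1))). apply ex_bc. apply Hu2.
    - rewrite Series_minus. rewrite Series_scal_r. fold S1 S2. rewrite Heq.
      assert (E : rpow S1 q = S1 * rpow S1 (q-1)) by (rewrite <- (rpow_1 S1) at 2 by apply S1_ge0; rewrite <- rpow_plus; f_equal; ring). lra.
      apply ex_bc. apply Hu2. }
  assert (Hb : forall n, u n <> 0 -> b n = S1).
  { intros n Hn. specialize (Hz n). rewrite pow2_eq in Hz.
    assert (0 < b n) by (apply rpow_gt0; apply Rabs_pos_lt; auto).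
    assert (rpow S1 (q-1) = rpow (b n) (q-1)).
    { apply Rmult_eq_reg_l with (b n); lra. }
    symmetry. apply rpow_inj in H0; auto. apply S1_ge0. apply b_ge0. pose proof q_gt1; lra. }
  destruct (Req_dec (u k) 0); auto. exfalso.
  pose proof (Series_ge_two b j k b_ge0 Hu1 (fun E => Hk (eq_sym E))).
  fold S1 in H0. rewrite (Hb j Hj), (Hb k H) in H0.
  assert (0 < b j) by (apply rpow_gt0; apply Rabs_pos_lt; auto). rewrite (Hb j Hj) in H1. lra.
Qed.

End Cmp.

Lemma single_terms p lam j k :
  rpow (Rabs (lam * e j k)) p = if Nat.eqb k j then rpow (Rabs lam) p else 0.
Proof.
  unfold e. destruct (Nat.eqb k j). rewrite Rmult_1_r; auto.
  rewrite Rmult_0_r, Rabs_R0, rpow_0; auto.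
Qed.

Lemma norm_single p lam j : 0 < p -> lp_norm p (fun k => lam * e j k) = Rabs lam.
Proof.
  intros. unfold lp_norm. rewrite (Series_ext _ _ (single_terms p lam j)).
  rewrite single_Series. apply rpow_inv; auto. apply Rabs_pos.
Qed.

Lemma zero_coord p m y x x0 lam j z : 1 < p ->
  (forall i, (i < m)%nat -> in_lp p (y i)) ->
  best_approx p x (span m y) x0 ->
  seq_sub x x0 = (fun k => lam * e j k) -> lam <> 0 ->
  span m y z -> z j = 0.
Proof.
  intros Hp Hy [Hx0 Hbest] Hu Hlam Hz.
  destruct (Req_dec (z j) 0) as [|Hzj]; auto. exfalso.
  assert (Hzl : in_lp p z) by (apply (span_in_lp p m y); auto; lra).
  set (L := rpow (Rabs lam) p).
  assert (HL : 0 < L) by (apply rpow_gt0, Rabs_pos_lt; auto).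
  set (Z := Series (fun k => rpow (Rabs (z k)) p)).
  assert (HZ : 0 <= Z) by (apply Series_ge0; [intro; apply rpow_ge0|apply Hzl]).
  set (K := rpow (Rabs lam / Rabs (z j)) p).
  assert (HK : 0 <= K) by apply rpow_ge0.
  set (C := K * Z).
  assert (HC : 0 <= C) by (apply Rmult_le_pos; auto).
  set (s := Rmin (1/2) (rpow (L / (C + 1)) (1 / (p - 1)))).
  assert (Hs0 : 0 < s).
  { unfold s, Rmin. destruct (Rle_dec _ _). lra. apply rpow_gt0.
    apply Rdiv_lt_0_compat; lra. }
  assert (Hs1 : s <= 1/2) by apply Rmin_l.
  assert (Hs2 : rpow s (p - 1) <= L / (C + 1)).
  { eapply Rle_trans. apply rpow_le. lra. apply Rmin_r. lra.
    rewrite rpow_rpow. replace (1 / (p - 1) * (p - 1)) with 1 by (field; lra).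
    rewrite rpow_1. lra. apply Rlt_le, Rdiv_lt_0_compat; lra.
    apply Rlt_le, Rdiv_lt_0_compat; lra. }
  assert (HsC : rpow s (p - 1) * C < L).
  { assert (L / (C+1) * C < L).
    { unfold Rdiv. replace (L * / (C+1) * C) with (L * (C / (C+1))) by (field; lra).
      assert (C / (C+1) < 1). { apply (Rmult_lt_reg_r (C+1)). lra. field_simplify; lra. }
      nra. }
    pose proof (rpow_ge0 s (p-1)). nra. }
  assert (Hsp : rpow s p = s * rpow s (p - 1)).
  { rewrite <- (rpow_1 s) at 2 by lra. rewrite <- rpow_plus. f_equal; ring. }
  set (t := s * lam / z j).
  set (w := seq_sub x (fun k => x0 k + t * z k)).
  assert (Hw : forall k, w k = lam * e j k - t * z k).
  { intro k. unfold w, seq_sub. pose proof (equal_f Hu k). unfold seq_sub in H. lra. }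
  set (B := fun k => (if Nat.eqb k j then rpow (Rabs (lam - t * z j)) p else 0)
                     + rpow (Rabs t) p * rpow (Rabs (z k)) p).
  assert (HB : forall k, 0 <= rpow (Rabs (w k)) p <= B k).
  { intro k. split. apply rpow_ge0. unfold B. rewrite Hw. unfold e.
    destruct (Nat.eqb k j) eqn:E.
    - apply Nat.eqb_eq in E; subst. rewrite Rmult_1_r.
      pose proof (rpow_ge0 (Rabs t) p). pose proof (rpow_ge0 (Rabs (z j)) p). nra.
    - rewrite Rmult_0_r, Rminus_0_l, Rabs_Ropp, Rabs_mult, rpow_mul by apply Rabs_pos. lra. }
  assert (HexB : ex_series B).
  { apply exs_plus. apply single_ex. apply exs_scal. apply Hzl. }
  assert (HSB : Series B = rpow (Rabs (lam - t * z j)) p + rpow (Rabs t) p * Z).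
  { unfold B. rewrite Series_plus. rewrite single_Series, Series_scal_l. reflexivity.
    apply single_ex. apply exs_scal. apply Hzl. }
  assert (E1 : lam - t * z j = (1 - s) * lam) by (unfold t; field; auto).
  assert (E2 : Rabs t = s * (Rabs lam / Rabs (z j))).
  { unfold t. unfold Rdiv. rewrite !Rabs_mult, Rabs_inv, (Rabs_pos_eq s) by lra. ring. }
  assert (HS1 : rpow (Rabs (lam - t * z j)) p <= (1 - s) * L).
  { rewrite E1, Rabs_mult, (Rabs_pos_eq (1 - s)) by lra.
    rewrite rpow_mul by (try apply Rabs_pos; lra). unfold L.
    pose proof (rpow_le_self (1 - s) p). pose proof (rpow_ge0 (Rabs lam) p).
    assert (rpow (1 - s) p <= 1 - s) by (apply H; lra). nra. }
  assert (HS2 : rpow (Rabs t) p * Z = s * (rpow s (p - 1) * C)).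
  { rewrite E2, rpow_mul, Hsp. unfold C, K. ring. lra.
    apply Rlt_le, Rdiv_lt_0_compat; apply Rabs_pos_lt; auto. }
  assert (HWlt : Series (fun k => rpow (Rabs (w k)) p) < L).
  { eapply Rle_lt_trans. apply Series_le; eauto. rewrite HSB, HS2. nra. }
  assert (Hspan : span m y (fun k => x0 k + t * z k)) by (apply span_comb; auto).
  specialize (Hbest _ Hspan). fold w in Hbest.
  rewrite Hu, norm_single in Hbest by lra.
  unfold lp_norm in Hbest.
  rewrite <- (rpow_inv (Rabs lam) p) in Hbest by (try apply Rabs_pos; lra). fold L in Hbest.
  apply rpow_le_inv in Hbest.
  lra. apply rpow_ge0. apply Series_ge0. intro; apply rpow_ge0.
  eapply (@ex_series_le R_AbsRing R_CompleteNormedModule); [|exact HexB]. intro n. change norm with Rabs; simpl.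
  rewrite Rabs_rpow. apply HB. apply Rdiv_lt_0_compat; lra.
Qed.

Lemma dist_best p x Y x0 : best_approx p x Y x0 -> dist_p p x Y = Finite (lp_norm p (seq_sub x x0)).
Proof.
  intros [H1 H2]. unfold dist_p. apply glb_min. exists x0; auto.
  intros s [z [Hz ->]]. auto.
Qed.

Theorem theorem5p10 (p1 p2 : R) (m : nat) (x : seqR) (y : nat -> seqR)
    (x0 y0 : seqR) :
  1 < p1 -> p1 < p2 ->
  in_lp p1 x -> in_lp p2 x ->
  (forall i, (i < m)%nat -> in_lp p1 (y i) /\ in_lp p2 (y i)) ->
  lin_indep m y ->
  ~ span m y x ->
  best_approx p1 x (span m y) x0 ->
  best_approx p2 x (span m y) y0 ->
  (dist_p p1 x (span m y) = dist_p p2 x (span m y) <->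
   exists (lam : R) (j : nat), lam <> 0 /\
     seq_sub x x0 = (fun k => lam * e j k) /\
     seq_sub x y0 = (fun k => lam * e j k) /\
     (forall z, span m y z -> in_lp p1 z /\ in_lp p2 z /\ z j = 0)).
Proof.
  intros Hp1 Hp12 Hx1 Hx2 Hy Hind Hnx Hb1 Hb2.
  assert (Hy1 : forall i, (i < m)%nat -> in_lp p1 (y i)) by (intros; apply Hy; auto).
  assert (Hy2 : forall i, (i < m)%nat -> in_lp p2 (y i)) by (intros; apply Hy; auto).
  rewrite (dist_best _ _ _ _ Hb1), (dist_best _ _ _ _ Hb2).
  split.
  - intro Heq. injection Heq as Heq.
    set (u := seq_sub x x0) in *. set (v := seq_sub x y0) in *.
    destruct Hb1 as [Hx0 Hbest1]. destruct Hb2 as [Hy0 Hbest2].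
    assert (Hu1 : in_lp p1 u).
    { apply (in_lp_comb p1 x0 x (-1)); try lra; auto.
      apply (span_in_lp p1 m y); auto; lra. intro; unfold u, seq_sub; ring. }
    assert (Hu2 : in_lp p2 u).
    { apply (in_lp_comb p2 x0 x (-1)); try lra; auto.
      apply (span_in_lp p2 m y); auto; lra. intro; unfold u, seq_sub; ring. }
    assert (Hv2 : in_lp p2 v).
    { apply (in_lp_comb p2 y0 x (-1)); try lra; auto.
      apply (span_in_lp p2 m y); auto; lra. intro; unfold v, seq_sub; ring. }
    assert (Hvu : lp_norm p2 v <= lp_norm p2 u) by (apply Hbest2; auto).
    assert (Hle : lp_norm p2 u <= lp_norm p1 u) by (apply norm_le; auto; lra).
    assert (Hequ : lp_norm p2 u = lp_norm p1 u) by lra.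
    assert (Hne : exists j, u j <> 0).
    { apply NNPP. intro Hn. apply Hnx.
      replace x with x0; auto. apply functional_extensionality; intro k.
      destruct (Req_dec (u k) 0). unfold u, seq_sub in H; lra.
      exfalso; apply Hn; eauto. }
    destruct Hne as [j Hj].
    assert (HuE : u = (fun k => u j * e j k)).
    { apply functional_extensionality; intro k. unfold e.
      destruct (Nat.eqb k j) eqn:E. apply Nat.eqb_eq in E; subst; ring.
      rewrite Rmult_0_r. apply (norm_eq_single p1 p2 u) with j; auto; try lra.
      intro; subst; rewrite Nat.eqb_refl in E; discriminate. }
    assert (Hzero : forall z, span m y z -> z j = 0).
    { intros z Hz. apply (zero_coord p1 m y x x0 (u j) j z); auto. split; auto. }
    set (w := fun k => x0 k + (-1) * y0 k).
    assert (Hw : span m y w) by (apply span_comb; auto).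
    assert (Hwj : w j = 0) by auto.
    assert (Hvk : forall k, v k = u k + w k) by (intro; unfold v, u, w, seq_sub; ring).
    assert (HS : Series (fun k => rpow (Rabs (v k)) p2) <= Series (fun k => rpow (Rabs (u k)) p2)).
    { unfold lp_norm in Hvu. apply rpow_le_inv in Hvu; auto.
      apply Series_ge0. intro; apply rpow_ge0. apply Hv2.
      apply Series_ge0. intro; apply rpow_ge0. apply Hu2.
      apply Rdiv_lt_0_compat; lra. }
    assert (Hd : forall k, rpow (Rabs (v k)) p2 - rpow (Rabs (u k)) p2 = 0).
    { apply Series_zero_terms.
      - intro k. destruct (Nat.eq_dec k j). subst. rewrite Hvk, Hwj, Rplus_0_r. lra.
        rewrite HuE. unfold e. replace (Nat.eqb k j) with false.
        rewrite Rmult_0_r, Rabs_R0, rpow_0. pose proof (rpow_ge0 (Rabs (v k)) p2). lra.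
        symmetry; apply Nat.eqb_neq; auto.
      - apply (ex_series_minus (fun k => rpow (Rabs (v k)) p2)); auto.
      - rewrite Series_minus; auto. lra. }
    assert (HvE : v = (fun k => u j * e j k)).
    { apply functional_extensionality; intro k. unfold e.
      destruct (Nat.eqb k j) eqn:E. apply Nat.eqb_eq in E; subst.
      rewrite Hvk, Hwj; ring.
      rewrite Rmult_0_r. specialize (Hd k).
      rewrite HuE in Hd. unfold e in Hd. rewrite E, Rmult_0_r, Rabs_R0, rpow_0 in Hd.
      assert (rpow (Rabs (v k)) p2 = 0) by lra. apply rpow_eq0 in H.
      pose proof (Rabs_pos (v k)). apply Rabs_eq_0. lra. }
    exists (u j), j. split; auto. split; auto. split; auto.
    intros z Hz. split. apply (span_in_lp p1 m y); auto; lra.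
    split. apply (span_in_lp p2 m y); auto; lra. auto.
  - intros [lam [j [_ [Hu [Hv _]]]]]. rewrite Hu, Hv, !norm_single by lra. reflexivity.
Qed.
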